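(* Let $F$ be a continuous, order-preserving, and additively homogeneous self-map of $\mathbb{T}^n$. Then \[ \operatorname{cond}_{\mathbb{R}}(F) = |\underline{\mathrm{cw}}(F)|^{-1} \quad\text{and}\quad \operatorname{cond}(F) = |\overline{\mathrm{cw}}(F)|^{-1}, \] with the conventions $0^{-1}=+\infty$ and $(+\infty)^{-1}=0$.
   Context: $\mathbb{T} = \mathbb{R}\cup\{-\infty\}$ is the tropical (max-plus) semifield. $\mathbb{T}$ carries the topology of the metric $(a,b)\mapsto|e^a-e^b|$, and $\mathbb{T}^n$ carries the product topology. $\mathbb{T}^n$ is ordered entrywise, and $\mathbb{0}\in\mathbb{T}^n$ denotes the vector with all entries $-\infty$. For $\lambda\in\mathbb{T}$ and $x\in\mathbb{T}^n$, $\lambda+x$ is the vector with entries $\lambda+x_i$; for $u\in\mathbb{R}^n$, $u+F$ denotes the map $x\mapsto u+F(x)$ (entrywise addition). A self-map $F$ of $\mathbb{T}^n$ is order-preserving if $x\le y$ implies $F(x)\le F(y)$, and additively homogeneous if $F(\lambda+x)=\lambda+F(x)$ for all $\lambda\in\mathbb{T}$ and $x\in\mathbb{T}^n$. Notation: $y\ll z$ means $y_i<z_i$ for all $i$; $\|u\|_\infty=\max_i|u_i|$. Upper and lower Collatz–Wielandt numbers: $\overline{\mathrm{cw}}(F)=\inf\{\mu\in\mathbb{R}: \exists z\in\mathbb{R}^n,\ F(z)\le \mu+z\}$ and $\underline{\mathrm{cw}}(F)=\sup\{\mu\in\mathbb{R}: \exists z\in\mathbb{R}^n,\ F(z)\ge\mu+z\}$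 (with $\inf\emptyset=+\infty$, $\sup\emptyset=-\infty$). Feasibility problems: $\mathscr{P}(F)$ is the problem ''does there exist $x\in\mathbb{T}^n$ with $x\ne\mathbb{0}$ and $x\le F(x)$?''; $\mathscr{P}_{\mathbb{R}}(F)$ is the problem ''does there exist $x\in\mathbb{R}^n$ with $x\ll F(x)$?''. A problem is feasible if such an $x$ exists, infeasible otherwise. Condition numbers: if $\mathscr{P}(F)$ is feasible, $\operatorname{cond}(F)=(\inf\{\|u\|_\infty: u\in\mathbb{R}^n,\ \mathscr{P}(u+F)\text{ infeasible}\})^{-1}$; if $\mathscr{P}(F)$ is infeasible, $\operatorname{cond}(F)=(\inf\{\|u\|_\infty: u\in\mathbb{R}^n,\ \mathscr{P}(u+F)\text{ feasible}\})^{-1}$, with $0^{-1}=+\infty$ and $(+\infty)^{-1}=0$ (infimum of the empty set is $+\infty$). $\operatorname{cond}_{\mathbb{R}}(F)$ is defined identically with $\mathscr{P}$ replaced by $\mathscr{P}_{\mathbb{R}}$. *)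

(* Defs.v *)
From Stdlib Require Import Reals Lra ClassicalEpsilon.
From Stdlib Require Fin.
Open Scope R_scope.
Set Implicit Arguments.

(** Tropical (max-plus) semifield T = R ∪ {-oo}: [None] is -oo. *)
Definition Trop := option R.
Definition Tvec (n : nat) := Fin.t n -> Trop.
Definition Rvec (n : nat) := Fin.t n -> R.

Definition tle (a b : Trop) : Prop :=
  match a, b with
  | None, _ => True
  | Some _, None => False
  | Some x, Some y => x <= y
  end.

Definition tlt (a b : Trop) : Prop :=
  match a, b with
  | None, None => False
  | None, Some _ => True
  | Some _, None => False
  | Some x, Some y => x < y
  end.

Definition tadd (l a : Trop) : Trop :=
  match l, a with
  | Some x, Some y => Some (x + y)
  | _, _ => None
  end.

Definition texp (a : Trop) : R := match a with None => 0 | Some x => exp x end.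
Definition tdist (a b : Trop) : R := Rabs (texp a - texp b).

Definition vle n (x y : Tvec n) : Prop := forall i, tle (x i) (y i).
Definition vshift n (l : Trop) (x : Tvec n) : Tvec n := fun i => tadd l (x i).
Definition vzero n : Tvec n := fun _ => None.
Definition of_real n (z : Rvec n) : Tvec n := fun i => Some (z i).

Definition continuous_T n (F : Tvec n -> Tvec n) : Prop :=
  forall (x : Tvec n) (eps : R), 0 < eps ->
    exists delta, 0 < delta /\
      forall y : Tvec n, (forall i, tdist (x i) (y i) < delta) ->
        forall i, tdist (F x i) (F y i) < eps.

Definition order_preserving n (F : Tvec n -> Tvec n) : Prop :=
  forall x y : Tvec n, vle x y -> vle (F x) (F y).

Definition additively_homogeneous n (F : Tvec n -> Tvec n) : Prop :=
  forall (l : Trop) (x : Tvec n), F (vshift l x) = vshift l (F x).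

Definition translate n (u : Rvec n) (F : Tvec n -> Tvec n) : Tvec n -> Tvec n :=
  fun x i => tadd (Some (u i)) (F x i).

Fixpoint vnorm (n : nat) : Rvec n -> R :=
  match n return Rvec n -> R with
  | O => fun _ => 0
  | S m => fun u => Rmax (Rabs (u Fin.F1)) (@vnorm m (fun i => u (Fin.FS i)))
  end.

Definition feasible n (F : Tvec n -> Tvec n) : Prop :=
  exists x : Tvec n, x <> @vzero n /\ vle x (F x).

Definition feasible_R n (F : Tvec n -> Tvec n) : Prop :=
  exists x : Rvec n, forall i, tlt (of_real x i) (F (of_real x) i).

Inductive ER := ERfin (r : R) | ERpinf | ERminf.

Definition ER_le (a b : ER) : Prop :=
  match a, b with
  | ERminf, _ => True
  | _, ERpinf => True
  | ERfin x, ERfin y => x <= y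
  | _, _ => False
  end.

Definition is_ER_inf (S : R -> Prop) (v : ER) : Prop :=
  (forall r, S r -> ER_le v (ERfin r)) /\
  (forall w, (forall r, S r -> ER_le w (ERfin r)) -> ER_le w v).

Definition is_ER_sup (S : R -> Prop) (v : ER) : Prop :=
  (forall r, S r -> ER_le (ERfin r) v) /\
  (forall w, (forall r, S r -> ER_le (ERfin r) w) -> ER_le v w).

(** infimum / supremum in [-oo,+oo]; inf of empty set is +oo, sup is -oo *)
Definition ER_inf (S : R -> Prop) : ER := epsilon (inhabits ERpinf) (is_ER_inf S).
Definition ER_sup (S : R -> Prop) : ER := epsilon (inhabits ERminf) (is_ER_sup S).

Definition ER_abs (a : ER) : ER :=
  match a with ERfin r => ERfin (Rabs r) | _ => ERpinf end.

(** inverse with 0^{-1} = +oo, (+oo)^{-1} = 0 (and (-oo)^{-1} = 0, unused) *)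
Definition ER_inv (a : ER) : ER :=
  match a with
  | ERfin r => if Req_dec_T r 0 then ERpinf else ERfin (/ r)
  | _ => ERfin 0
  end.

Definition cw_upper n (F : Tvec n -> Tvec n) : ER :=
  ER_inf (fun mu => exists z : Rvec n,
            vle (F (of_real z)) (vshift (Some mu) (of_real z))).

Definition cw_lower n (F : Tvec n -> Tvec n) : ER :=
  ER_sup (fun mu => exists z : Rvec n,
            vle (vshift (Some mu) (of_real z)) (F (of_real z))).

Definition cond_gen n (P : (Tvec n -> Tvec n) -> Prop) (F : Tvec n -> Tvec n) : ER :=
  if excluded_middle_informative (P F)
  then ER_inv (ER_inf (fun r => exists u : Rvec n, r = vnorm u /\ ~ P (translate u F)))
  else ER_inv (ER_inf (fun r => exists u : Rvec n, r = vnorm u /\ P (translate u F))).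

Definition cond n (F : Tvec n -> Tvec n) : ER := cond_gen (@feasible n) F.
Definition cond_R n (F : Tvec n -> Tvec n) : ER := cond_gen (@feasible_R n) F.

(* Main.v *)
Require Import Defs.
From Stdlib Require Import Reals Lra Lia ClassicalEpsilon Classical FunctionalExtensionality.
From Stdlib Require Fin.
Open Scope R_scope.
Set Implicit Arguments.

Lemma exp_le_mono x y : x <= y -> exp x <= exp y.
Proof. intros [H|H]; [left; apply exp_increasing; auto| subst; lra]. Qed.
Lemma exp_le_rev x y : exp x <= exp y -> x <= y.
Proof. intros H. destruct (Rle_or_lt x y) as [h|h]; auto. apply exp_increasing in h; lra. Qed.

Lemma texp_ge0 a : 0 <= texp a.
Proof. destruct a; simpl; [left; apply exp_pos| lra]. Qed.

Lemma tle_texp a b : tle a b <-> texp a <= texp b.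
Proof.
  destruct a as [x|], b as [y|]; simpl; split; intro H; try tauto; try lra;
  try (apply exp_le_mono; auto; fail); try (apply exp_le_rev; auto; fail);
  try (pose proof (exp_pos x); lra); try (pose proof (exp_pos y); lra).
Qed.

Lemma fin_nat_bound n (P : Fin.t n -> nat -> Prop) :
  (forall i k k', P i k -> (k <= k')%nat -> P i k') ->
  (forall i, exists k, P i k) -> exists k, forall i, P i k.
Proof.
  revert P; induction n as [|n IH]; intros P Hmon Hex.
  - exists 0%nat. intro i. inversion i.
  - destruct (IH (fun i => P (Fin.FS i))) as [k1 Hk1].
    + intros; eapply Hmon; eauto.
    + intro i; apply Hex.
    + destruct (Hex Fin.F1) as [k0 Hk0].
      exists (Nat.max k0 k1). intro i.
      apply (Fin.caseS' i).
      * eapply Hmon; [exact Hk0| lia].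
      * intro j; eapply Hmon; [apply Hk1| lia].
Qed.

Lemma fin_real_bound n (Q : Fin.t n -> R -> Prop) :
  (forall i r r', Q i r -> 0 < r' <= r -> Q i r') ->
  (forall i, exists r, 0 < r /\ Q i r) -> exists r, 0 < r /\ forall i, Q i r.
Proof.
  revert Q; induction n as [|n IH]; intros Q Hmon Hex.
  - exists 1. split; [lra|]. intro i. inversion i.
  - destruct (IH (fun i => Q (Fin.FS i))) as [r1 [Hr1 Hk1]].
    + intros; eapply Hmon; eauto.
    + intro i; apply Hex.
    + destruct (Hex Fin.F1) as [r0 [Hr0 Hk0]].
      exists (Rmin r0 r1). split; [apply Rmin_glb_lt; auto|]. intro i.
      apply (Fin.caseS' i).
      * eapply Hmon; [exact Hk0| split; [apply Rmin_glb_lt; auto| apply Rmin_l]].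
      * intro j; eapply Hmon; [apply Hk1| split; [apply Rmin_glb_lt; auto| apply Rmin_r]].
Qed.

Lemma fin_argmax m (g : Fin.t (S m) -> R) : exists i0, forall i, g i <= g i0.
Proof.
  induction m as [|m IH].
  - exists Fin.F1. intro i. apply (Fin.caseS' i); [lra| intro j; inversion j].
  - destruct (IH (fun i => g (Fin.FS i))) as [j Hj].
    destruct (Rle_or_lt (g Fin.F1) (g (Fin.FS j))) as [h|h].
    + exists (Fin.FS j). intro i. apply (Fin.caseS' i); [auto| intro k; apply Hj].
    + exists Fin.F1. intro i. apply (Fin.caseS' i); [lra| intro k; specialize (Hj k); simpl in Hj; lra].
Qed.

Lemma vnorm_ge n (u : Rvec n) i : Rabs (u i) <= vnorm u.
Proof.
  induction n as [|n IH].
  - inversion i.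
  - simpl. apply (Fin.caseS' i).
    + apply Rmax_l.
    + intro j. eapply Rle_trans; [apply (IH (fun k => u (Fin.FS k)))| apply Rmax_r].
Qed.

Lemma vnorm_const m c : vnorm (n:=S m) (fun _ => c) = Rabs c.
Proof.
  induction m as [|m IH].
  - simpl. apply Rmax_left. apply Rabs_pos.
  - change (Rmax (Rabs c) (vnorm (n:=S m) (fun _ => c)) = Rabs c). rewrite IH. apply Rmax_left; lra.
Qed.

Lemma ER_le_antisym a b : ER_le a b -> ER_le b a -> a = b.
Proof. destruct a, b; simpl; try tauto; intros; f_equal; lra. Qed.

Lemma ER_inf_eq S v : is_ER_inf S v -> ER_inf S = v.
Proof.
  intro H. unfold ER_inf.
  pose proof (epsilon_spec (inhabits ERpinf) (is_ER_inf S) (ex_intro _ v H)) as H2.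
  set (w := epsilon _ _) in *.
  destruct H as [H1 H1'], H2 as [H2 H2'].
  apply ER_le_antisym; [apply H1'; auto| apply H2'; auto].
Qed.

Lemma ER_sup_eq S v : is_ER_sup S v -> ER_sup S = v.
Proof.
  intro H. unfold ER_sup.
  pose proof (epsilon_spec (inhabits ERminf) (is_ER_sup S) (ex_intro _ v H)) as H2.
  set (w := epsilon _ _) in *.
  destruct H as [H1 H1'], H2 as [H2 H2'].
  apply ER_le_antisym; [apply H2'; auto| apply H1'; auto].
Qed.

Lemma ER_sup_exists S : exists v, is_ER_sup S v.
Proof.
  destruct (classic (exists x, S x)) as [Hne|Hemp].
  - destruct (classic (exists m, forall x, S x -> x <= m)) as [Hb|Hnb].
    + destruct (completeness S Hb Hne) as [m [Hm1 Hm2]].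
      exists (ERfin m). split.
      * intros r Hr. simpl. apply Hm1; auto.
      * intros w Hw. destruct w as [a| |]; simpl.
        -- apply Hm2. intros x Hx. specialize (Hw x Hx). simpl in Hw. auto.
        -- auto.
        -- destruct Hne as [x Hx]. specialize (Hw x Hx). simpl in Hw. auto.
    + exists ERpinf. split.
      * intros r Hr; simpl; auto.
      * intros w Hw. destruct w as [a| |]; simpl.
        -- apply Hnb. exists a. intros x Hx. specialize (Hw x Hx). simpl in Hw. auto.
        -- auto.
        -- destruct Hne as [x Hx]. specialize (Hw x Hx). simpl in Hw. auto.
  - exists ERminf. split.
    + intros r Hr. exfalso; apply Hemp; eauto.
    + intros w Hw. destruct w; simpl; auto.
Qed.

Lemma ER_inf_exists S : exists v, is_ER_inf S v.
Proof.
  destruct (ER_sup_exists (fun x => S (- x))) as [v [H1 H2]].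
  exists (match v with ERfin m => ERfin (-m) | ERpinf => ERminf | ERminf => ERpinf end).
  split.
  - intros r Hr. specialize (H1 (- r)). rewrite Ropp_involutive in H1. specialize (H1 Hr).
    destruct v; simpl in *; auto; lra.
  - intros w Hw.
    specialize (H2 (match w with ERfin m => ERfin (-m) | ERpinf => ERminf | ERminf => ERpinf end)).
    assert (H3 : forall r, S (- r) -> ER_le (ERfin r)
       (match w with ERfin m => ERfin (-m) | ERpinf => ERminf | ERminf => ERpinf end)).
    { intros r Hr. specialize (Hw _ Hr). destruct w; simpl in *; auto; lra. }
    specialize (H2 H3). destruct v, w; simpl in *; auto; lra.
Qed.

Lemma inf_empty (I : R -> Prop) : (forall r, ~ I r) -> is_ER_inf I ERpinf.
Proof.
  intro H. split.
  - intros r Hr; exfalso; eapply H; eauto.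
  - intros w _. destruct w; simpl; auto.
Qed.

Lemma inf_min (I : R -> Prop) m : I m -> (forall r, I r -> m <= r) -> is_ER_inf I (ERfin m).
Proof.
  intros Hm H. split.
  - intros r Hr. simpl. auto.
  - intros w Hw. apply Hw; auto.
Qed.

Lemma inf_fin_lb T c : is_ER_inf T (ERfin c) -> forall mu, T mu -> c <= mu.
Proof. intros [H _] mu Hmu. apply (H _ Hmu). Qed.
Lemma inf_fin_approx T c : is_ER_inf T (ERfin c) -> forall a, c < a -> exists mu, T mu /\ mu < a.
Proof.
  intros [_ H] a Ha. apply NNPP; intro Hn.
  assert (ER_le (ERfin a) (ERfin c)).
  { apply H. intros r Hr. simpl. apply Rnot_lt_le. intro. apply Hn; eauto. }
  simpl in *; lra.
Qed.
Lemma inf_pinf T : is_ER_inf T ERpinf -> forall mu, ~ T mu.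
Proof. intros [H _] mu Hmu. apply (H _ Hmu). Qed.
Lemma inf_minf T : is_ER_inf T ERminf -> forall a, exists mu, T mu /\ mu < a.
Proof.
  intros [_ H] a. apply NNPP; intro Hn.
  assert (ER_le (ERfin a) ERminf).
  { apply H. intros r Hr. simpl. apply Rnot_lt_le. intro. apply Hn; eauto. }
  simpl in *; auto.
Qed.
Lemma sup_fin_ub S c : is_ER_sup S (ERfin c) -> forall mu, S mu -> mu <= c.
Proof. intros [H _] mu Hmu. apply (H _ Hmu). Qed.
Lemma sup_fin_approx S c : is_ER_sup S (ERfin c) -> forall a, a < c -> exists mu, S mu /\ a < mu.
Proof.
  intros [_ H] a Ha. apply NNPP; intro Hn.
  assert (ER_le (ERfin c) (ERfin a)).
  { apply H. intros r Hr. simpl. apply Rnot_lt_le. intro. apply Hn; eauto. }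
  simpl in *; lra.
Qed.
Lemma sup_minf S : is_ER_sup S ERminf -> forall mu, ~ S mu.
Proof. intros [H _] mu Hmu. apply (H _ Hmu). Qed.
Lemma sup_pinf S : is_ER_sup S ERpinf -> forall a, exists mu, S mu /\ a < mu.
Proof.
  intros [_ H] a. apply NNPP; intro Hn.
  assert (ER_le ERpinf (ERfin a)).
  { apply H. intros r Hr. simpl. apply Rnot_lt_le. intro. apply Hn; eauto. }
  simpl in *; auto.
Qed.

Lemma condA n (Q : (Tvec n -> Tvec n) -> Prop) (F : Tvec n -> Tvec n) (S : R -> Prop) v :
  is_ER_sup S v ->
  (Q F <-> exists mu, S mu /\ 0 < mu) ->
  (forall u, Q (translate u F) -> exists mu, S mu /\ 0 < mu + vnorm u) ->
  (forall u, (exists mu, S mu /\ 0 < mu - vnorm u) -> Q (translate u F)) ->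
  ((exists r, v = ERfin r) -> forall c, exists u, vnorm u = Rabs c /\
       (Q (translate u F) <-> exists mu, S mu /\ 0 < mu + c)) ->
  cond_gen Q F = ER_inv (ER_abs v).
Proof.
  intros Hv HQF H1 H2 Hc. unfold cond_gen.
  destruct v as [c| |].
  - specialize (Hc (ex_intro _ c eq_refl)).
    destruct (Rlt_or_le 0 c) as [Hpos|Hneg].
    + destruct (excluded_middle_informative (Q F)) as [HQ|HQ].
      * rewrite (ER_inf_eq (v:=ERfin (c))). { simpl. rewrite Rabs_pos_eq by lra. reflexivity. }
        destruct (Hc (- c)) as [u [Hu HPu]].
        apply inf_min.
        -- exists u. split; [rewrite Hu, Rabs_Ropp, Rabs_pos_eq; lra|].
           rewrite HPu. intros [mu [Hmu Hlt]]. pose proof (sup_fin_ub Hv _ Hmu). lra.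
        -- intros r [u' [-> Hn]]. apply Rnot_lt_le. intro Hlt. apply Hn, H2.
           destruct (sup_fin_approx Hv (a:=vnorm u')) as [mu [Hmu Hl]]; auto.
           exists mu; split; auto; lra.
      * exfalso. apply HQ, HQF.
        destruct (sup_fin_approx Hv (a:=0)) as [mu [Hmu Hl]]; auto. eauto.
    + destruct (excluded_middle_informative (Q F)) as [HQ|HQ].
      * exfalso. apply HQF in HQ. destruct HQ as [mu [Hmu Hl]].
        pose proof (sup_fin_ub Hv _ Hmu). lra.
      * rewrite (ER_inf_eq (v:=ERfin (-c))). { simpl. rewrite Rabs_left1 by lra. reflexivity. }
        split.
        -- intros r [u [-> Hu]]. simpl. destruct (H1 u Hu) as [mu [Hmu Hl]].
           pose proof (sup_fin_ub Hv _ Hmu). lra.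
        -- intros w Hw. destruct w as [a| |]; simpl; auto.
           ++ apply Rnot_lt_le. intro Ha.
              destruct (Hc (- c + (a + c) / 2)) as [u [Hu HPu]].
              destruct (sup_fin_approx Hv (a:=c - (a + c)/2)) as [mu [Hmu Hl]]; [lra|].
              assert (Hq : Q (translate u F)) by (apply HPu; exists mu; split; auto; lra).
              specialize (Hw (vnorm u) (ex_intro _ u (conj eq_refl Hq))). simpl in Hw.
              rewrite Hu, Rabs_pos_eq in Hw; lra.
           ++ destruct (Hc (- c + 1)) as [u [Hu HPu]].
              destruct (sup_fin_approx Hv (a:=c - 1)) as [mu [Hmu Hl]]; [lra|].
              assert (Hq : Q (translate u F)) by (apply HPu; exists mu; split; auto; lra).
              exact (Hw (vnorm u) (ex_intro _ u (conj eq_refl Hq))).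
  - destruct (excluded_middle_informative (Q F)) as [HQ|HQ].
    + rewrite (ER_inf_eq (v:=ERpinf)); [reflexivity|].
      apply inf_empty. intros r [u [-> Hn]]. apply Hn, H2.
      destruct (sup_pinf Hv (vnorm u)) as [mu [Hmu Hl]]. exists mu; split; auto; lra.
    + exfalso. apply HQ, HQF. destruct (sup_pinf Hv 0) as [mu [Hmu Hl]]. eauto.
  - destruct (excluded_middle_informative (Q F)) as [HQ|HQ].
    + exfalso. apply HQF in HQ. destruct HQ as [mu [Hmu _]]. exact (sup_minf Hv _ Hmu).
    + rewrite (ER_inf_eq (v:=ERpinf)); [reflexivity|].
      apply inf_empty. intros r [u [-> Hn]]. destruct (H1 u Hn) as [mu [Hmu _]].
      exact (sup_minf Hv _ Hmu).
Qed.

Lemma condB n (Q : (Tvec n -> Tvec n) -> Prop) (F : Tvec n -> Tvec n) (T : R -> Prop) v :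
  is_ER_inf T v ->
  (Q F <-> forall mu, T mu -> 0 <= mu) ->
  (forall u, Q (translate u F) -> forall mu, T mu -> 0 <= mu + vnorm u) ->
  (forall u, (forall mu, T mu -> 0 <= mu - vnorm u) -> Q (translate u F)) ->
  ((exists r, v = ERfin r) -> forall c, exists u, vnorm u = Rabs c /\
       (Q (translate u F) <-> forall mu, T mu -> 0 <= mu + c)) ->
  cond_gen Q F = ER_inv (ER_abs v).
Proof.
  intros Hv HQF H1 H2 Hc. unfold cond_gen.
  destruct v as [c| |].
  - specialize (Hc (ex_intro _ c eq_refl)).
    destruct (Rle_or_lt 0 c) as [Hpos|Hneg].
    + destruct (excluded_middle_informative (Q F)) as [HQ|HQ].
      * rewrite (ER_inf_eq (v:=ERfin (c))). { simpl. rewrite Rabs_pos_eq by lra. reflexivity. }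
        split.
        -- intros r [u [-> Hn]]. simpl. apply Rnot_lt_le. intro Hlt. apply Hn, H2.
           intros mu Hmu. pose proof (inf_fin_lb Hv _ Hmu). lra.
        -- intros w Hw. destruct w as [a| |]; simpl; auto.
           ++ apply Rnot_lt_le. intro Ha.
              destruct (Hc (- (c + (a - c) / 2))) as [u [Hu HPu]].
              destruct (inf_fin_approx Hv (a:=c + (a - c)/2)) as [mu [Hmu Hl]]; [lra|].
              assert (Hq : ~ Q (translate u F)).
              { rewrite HPu. intro HH. specialize (HH mu Hmu). lra. }
              specialize (Hw (vnorm u) (ex_intro _ u (conj eq_refl Hq))). simpl in Hw.
              rewrite Hu, Rabs_Ropp, Rabs_pos_eq in Hw; lra.
           ++ destruct (Hc (- (c + 1))) as [u [Hu HPu]].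
              destruct (inf_fin_approx Hv (a:=c + 1)) as [mu [Hmu Hl]]; [lra|].
              assert (Hq : ~ Q (translate u F)).
              { rewrite HPu. intro HH. specialize (HH mu Hmu). lra. }
              exact (Hw (vnorm u) (ex_intro _ u (conj eq_refl Hq))).
      * exfalso. apply HQ, HQF. intros mu Hmu. pose proof (inf_fin_lb Hv _ Hmu). lra.
    + destruct (excluded_middle_informative (Q F)) as [HQ|HQ].
      * exfalso. destruct (inf_fin_approx Hv (a:=0)) as [mu [Hmu Hl]]; auto.
        pose proof (proj1 HQF HQ mu Hmu). lra.
      * rewrite (ER_inf_eq (v:=ERfin (-c))). { simpl. rewrite Rabs_left by lra. reflexivity. }
        destruct (Hc (- c)) as [u [Hu HPu]].
        apply inf_min.
        -- exists u. split; [rewrite Hu, Rabs_Ropp, Rabs_left; lra|].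
           apply HPu. intros mu Hmu. pose proof (inf_fin_lb Hv _ Hmu). lra.
        -- intros r [u' [-> Hq]]. apply Rnot_lt_le. intro Hlt.
           destruct (inf_fin_approx Hv (a:= - vnorm u')) as [mu [Hmu Hl]]; [lra|].
           specialize (H1 u' Hq mu Hmu). lra.
  - destruct (excluded_middle_informative (Q F)) as [HQ|HQ].
    + rewrite (ER_inf_eq (v:=ERpinf)); [reflexivity|].
      apply inf_empty. intros r [u [-> Hn]]. apply Hn, H2.
      intros mu Hmu. exfalso. exact (inf_pinf Hv _ Hmu).
    + exfalso. apply HQ, HQF. intros mu Hmu. exfalso. exact (inf_pinf Hv _ Hmu).
  - destruct (excluded_middle_informative (Q F)) as [HQ|HQ].
    + exfalso. destruct (inf_minf Hv 0) as [mu [Hmu Hl]].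
      pose proof (proj1 HQF HQ mu Hmu). lra.
    + rewrite (ER_inf_eq (v:=ERpinf)); [reflexivity|].
      apply inf_empty. intros r [u [-> Hq]].
      destruct (inf_minf Hv (- vnorm u)) as [mu [Hmu Hl]].
      specialize (H1 u Hq mu Hmu). lra.
Qed.

Definition Sset n (G : Tvec n -> Tvec n) : R -> Prop :=
  fun mu => exists z : Rvec n, vle (vshift (Some mu) (of_real z)) (G (of_real z)).
Definition Tset n (G : Tvec n -> Tvec n) : R -> Prop :=
  fun mu => exists z : Rvec n, vle (G (of_real z)) (vshift (Some mu) (of_real z)).

Lemma u_bound n (u : Rvec n) i : - vnorm u <= u i <= vnorm u.
Proof. pose proof (vnorm_ge u i). revert H. unfold Rabs; destruct Rcase_abs; intros; lra. Qed.

Lemma feasR_iff n (G : Tvec n -> Tvec n) : feasible_R G <-> exists mu, Sset G mu /\ 0 < mu.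
Proof.
  split.
  - intros [x Hx].
    destruct (fin_real_bound (fun i r => tle (Some (r + x i)) (G (of_real x) i))) as [r [Hr Hall]].
    + intros i r r' H Hr'. destruct (G (of_real x) i); simpl in *; auto; lra.
    + intro i. specialize (Hx i). change (tlt (Some (x i)) (G (of_real x) i)) in Hx.
      destruct (G (of_real x) i) as [b|]; simpl in *; [|tauto].
      exists (b - x i). split; lra.
    + exists r. split; auto. exists x. intro i. specialize (Hall i). unfold vshift, of_real; simpl. auto.
  - intros [mu [[z Hz] Hmu]]. exists z. intro i. specialize (Hz i).
    unfold vshift, of_real in *; simpl in *.
    destruct (G (fun i => Some (z i)) i); simpl in *; auto; lra.
Qed.

Ltac tcase G z i :=
  unfold translate, vshift, of_real in *; simpl in *;
  destruct (G (fun i0 => Some (z i0)) i); simpl in *; auto; try lra.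

Lemma S_trans1 n (u : Rvec n) G mu : Sset G mu -> Sset (translate u G) (mu - vnorm u).
Proof. intros [z Hz]; exists z; intro i; specialize (Hz i); pose proof (u_bound u i); tcase G z i. Qed.
Lemma S_trans2 n (u : Rvec n) G mu : Sset (translate u G) mu -> Sset G (mu - vnorm u).
Proof. intros [z Hz]; exists z; intro i; specialize (Hz i); pose proof (u_bound u i); tcase G z i. Qed.
Lemma S_const n c (G : Tvec n -> Tvec n) mu : Sset G mu <-> Sset (translate (fun _ => c) G) (mu + c).
Proof. split; intros [z Hz]; exists z; intro i; specialize (Hz i); tcase G z i. Qed.
Lemma T_trans1 n (u : Rvec n) G mu : Tset G mu -> Tset (translate u G) (mu + vnorm u).
Proof. intros [z Hz]; exists z; intro i; specialize (Hz i); pose proof (u_bound u i); tcase G z i. Qed.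
Lemma T_trans2 n (u : Rvec n) G mu : Tset (translate u G) mu -> Tset G (mu + vnorm u).
Proof. intros [z Hz]; exists z; intro i; specialize (Hz i); pose proof (u_bound u i); tcase G z i. Qed.
Lemma T_const n c (G : Tvec n -> Tvec n) mu : Tset G mu <-> Tset (translate (fun _ => c) G) (mu + c).
Proof. split; intros [z Hz]; exists z; intro i; specialize (Hz i); tcase G z i. Qed.

Lemma S_down n (G : Tvec n -> Tvec n) mu mu' : Sset G mu -> mu' <= mu -> Sset G mu'.
Proof. intros [z Hz] Hle; exists z; intro i; specialize (Hz i); tcase G z i. Qed.
Lemma T_up n (G : Tvec n -> Tvec n) mu mu' : Tset G mu -> mu <= mu' -> Tset G mu'.
Proof. intros [z Hz] Hle; exists z; intro i; specialize (Hz i); tcase G z i. Qed.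

Lemma tdist_shift a x y : tdist (tadd (Some a) x) (tadd (Some a) y) = exp a * tdist x y.
Proof.
  unfold tdist. transitivity (Rabs (exp a * (texp x - texp y))).
  - f_equal. destruct x, y; simpl; rewrite ?exp_plus; ring.
  - rewrite Rabs_mult, (Rabs_pos_eq (exp a)); auto. left; apply exp_pos.
Qed.

Lemma translate_mono n (u : Rvec n) G : order_preserving G -> order_preserving (translate u G).
Proof.
  intros H x y Hxy i. specialize (H x y Hxy i). unfold translate.
  destruct (G x i), (G y i); simpl in *; auto; lra.
Qed.

Lemma translate_hom n (u : Rvec n) G : additively_homogeneous G -> additively_homogeneous (translate u G).
Proof.
  intros H l x. unfold translate. rewrite H. apply functional_extensionality. intro i.
  unfold vshift. destruct l, (G x i); simpl; auto. f_equal; ring.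
Qed.

Lemma translate_cont n (u : Rvec n) G : continuous_T G -> continuous_T (translate u G).
Proof.
  intros H x eps Heps.
  destruct (H x (eps / exp (vnorm u))) as [d [Hd Hy]].
  { apply Rdiv_lt_0_compat; auto; apply exp_pos. }
  exists d; split; auto. intros y Hxy i. unfold translate. rewrite tdist_shift.
  specialize (Hy y Hxy i). pose proof (u_bound u i).
  assert (exp (u i) <= exp (vnorm u)) by (apply exp_le_mono; lra).
  pose proof (exp_pos (u i)). pose proof (exp_pos (vnorm u)).
  assert (Hd0 : 0 <= tdist (G x i) (G y i)) by apply Rabs_pos.
  apply Rle_lt_trans with (exp (vnorm u) * tdist (G x i) (G y i)).
  - apply Rmult_le_compat_r; auto.
  - apply Rmult_lt_reg_l with (/ exp (vnorm u)). { apply Rinv_0_lt_compat; auto. }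
    rewrite <- Rmult_assoc, Rinv_l by lra. rewrite Rmult_1_l.
    unfold Rdiv in Hy. rewrite Rmult_comm. auto.
Qed.

Lemma tle_trans a b c : tle a b -> tle b c -> tle a c.
Proof. rewrite !tle_texp. lra. Qed.

Lemma exp_Rmax a b : exp (Rmax a b) = Rmax (exp a) (exp b).
Proof.
  unfold Rmax. destruct (Rle_dec a b) as [h1|h1], (Rle_dec (exp a) (exp b)) as [h2|h2]; auto.
  - exfalso. apply h2. apply exp_le_mono; auto.
  - apply Rle_antisym; auto. apply exp_le_mono. lra.
Qed.
Lemma exp_Rmin a b : exp (Rmin a b) = Rmin (exp a) (exp b).
Proof.
  unfold Rmin. destruct (Rle_dec a b) as [h1|h1], (Rle_dec (exp a) (exp b)) as [h2|h2]; auto.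
  - exfalso. apply h2. apply exp_le_mono; auto.
  - apply Rle_antisym; auto. apply exp_le_mono. lra.
Qed.

Lemma feas_easy n (G : Tvec n -> Tvec n) :
  order_preserving G -> additively_homogeneous G ->
  feasible G -> forall mu, Tset G mu -> 0 <= mu.
Proof.
  intros Hm Hh [x [Hx0 Hx]] mu [z Hz].
  apply Rnot_lt_le; intro Hmu.
  assert (Hj : exists j a, x j = Some a).
  { apply NNPP; intro Hn. apply Hx0. apply functional_extensionality. intro i.
    unfold vzero. destruct (x i) eqn:E; auto. exfalso; apply Hn; eauto. }
  destruct Hj as [j [a Ha]].
  destruct n as [|m]; [inversion j|].
  set (g := fun i => match x i with Some b => b - z i | None => a - z j - 1 end).
  destruct (fin_argmax g) as [i0 Hi0].
  set (t := g i0).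
  assert (Hxi0 : x i0 = Some (t + z i0)).
  { specialize (Hi0 j). unfold t, g in *. rewrite Ha in Hi0.
    destruct (x i0); [f_equal; ring| lra]. }
  assert (Hle : vle x (vshift (Some t) (of_real z))).
  { intro i. specialize (Hi0 i). unfold vshift, of_real, t, g in *. simpl.
    destruct (x i); simpl; auto. lra. }
  specialize (Hm _ _ Hle i0). rewrite Hh in Hm.
  specialize (Hx i0). specialize (Hz i0).
  assert (H3 : tle (x i0) (vshift (Some t) (vshift (Some mu) (of_real z)) i0)).
  { eapply tle_trans; [exact Hx|]. eapply tle_trans; [exact Hm|].
    unfold vshift in *. destruct (G (of_real z) i0); simpl in *; auto. lra. }
  rewrite Hxi0 in H3. unfold vshift, of_real in H3. simpl in H3. lra.
Qed.

Definition tmin (a b : Trop) : Trop :=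
  match a, b with Some x, Some y => Some (Rmin x y) | _, _ => None end.

Lemma texp_tmin a b : texp (tmin a b) = Rmin (texp a) (texp b).
Proof.
  destruct a as [x|], b as [y|]; simpl; try rewrite exp_Rmin; auto.
  - symmetry; apply Rmin_right. left; apply exp_pos.
  - symmetry; apply Rmin_left. left; apply exp_pos.
  - symmetry; apply Rmin_left. lra.
Qed.

Definition Psi n (G : Tvec n -> Tvec n) (x : Tvec n) : Tvec n := fun i => tmin (x i) (G x i).

Fixpoint yseq n (G : Tvec n -> Tvec n) (k : nat) : Tvec n :=
  match k with O => of_real (fun _ => 0) | S k => Psi G (yseq G k) end.

Lemma Rmin_close A B A' B' e : Rabs (A - A') < e -> Rabs (B - B') < e ->
  Rabs (Rmin A B - Rmin A' B') < e.
Proof.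
  intros H1 H2. apply Rabs_def2 in H1. apply Rabs_def2 in H2.
  apply Rabs_def1; unfold Rmin; repeat destruct Rle_dec; lra.
Qed.

Lemma Rmax_close A B C e : Rabs (A - C) < e / 2 -> 0 <= B < e / 2 -> 0 <= C ->
  Rabs (Rmax A B - C) < e.
Proof.
  intros H1 H2 H3. apply Rabs_def2 in H1.
  apply Rabs_def1; unfold Rmax; repeat destruct Rle_dec; lra.
Qed.

Lemma Psi_cont n (G : Tvec n -> Tvec n) : continuous_T G -> continuous_T (Psi G).
Proof.
  intros Hc x eps Heps. destruct (Hc x eps Heps) as [d [Hd Hy]].
  exists (Rmin d eps). split; [apply Rmin_glb_lt; auto|].
  intros y Hxy i. specialize (Hy y). unfold tdist, Psi in *. rewrite !texp_tmin.
  apply Rmin_close.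
  - eapply Rlt_le_trans; [apply Hxy| apply Rmin_r].
  - apply Hy. intro j. eapply Rlt_le_trans; [apply Hxy| apply Rmin_l].
Qed.

Lemma y_dec n (G : Tvec n -> Tvec n) k i : texp (yseq G (S k) i) <= texp (yseq G k i).
Proof. simpl. unfold Psi. rewrite texp_tmin. apply Rmin_l. Qed.

Lemma y_dec_gen n (G : Tvec n -> Tvec n) k k' i : (k <= k')%nat -> texp (yseq G k' i) <= texp (yseq G k i).
Proof.
  induction 1; [lra|]. eapply Rle_trans; [apply y_dec| auto].
Qed.

Lemma step2 n (G : Tvec n -> Tvec n) : continuous_T G -> ~ feasible G ->
  exists K, forall i, texp (yseq G K i) <= exp (-1).
Proof.
  intros Hc Hnf. apply NNPP; intro Hn.
  assert (Hi0 : exists i0, forall K, exp (-1) < texp (yseq G K i0)).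
  { apply NNPP; intro Hn2. apply Hn.
    apply fin_nat_bound.
    - intros i k k' H Hkk'. eapply Rle_trans; [apply y_dec_gen; eauto| auto].
    - intro i. apply NNPP; intro Hn3. apply Hn2. exists i. intro K.
      apply Rnot_le_lt. intro. apply Hn3; eauto. }
  destruct Hi0 as [i0 Hi0].
  set (e := fun i k => texp (yseq G k i)).
  assert (Hdec : forall i, Un_decreasing (e i)) by (intros i k; apply y_dec).
  assert (Hlb : forall i, has_lb (e i)).
  { intro i. exists 0. intros x [k ->]. unfold opp_seq, e. pose proof (texp_ge0 (yseq G k i)). lra. }
  set (l := fun i => proj1_sig (decreasing_cv _ (Hdec i) (Hlb i))).
  assert (Hcv : forall i, Un_cv (e i) (l i)) by (intro i; unfold l; destruct decreasing_cv; auto).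
  assert (Hle : forall i k, l i <= e i k) by (intros; apply decreasing_ineq; auto).
  assert (Hl0 : forall i, 0 <= l i).
  { intro i. apply Rnot_lt_le; intro H. destruct (Hcv i (- l i)) as [N HN]; [lra|].
    specialize (HN N (le_n _)). unfold R_dist in HN. apply Rabs_def2 in HN.
    pose proof (texp_ge0 (yseq G N i)). unfold e in HN. lra. }
  assert (Hli0 : exp (-1) <= l i0).
  { apply Rnot_lt_le; intro H. destruct (Hcv i0 (exp (-1) - l i0)) as [N HN]; [lra|].
    specialize (HN N (le_n _)). unfold R_dist in HN. apply Rabs_def2 in HN.
    specialize (Hi0 N). unfold e in HN. lra. }
  set (yinf := fun i => if Rlt_dec 0 (l i) then Some (ln (l i)) else None).
  assert (Hyinf : forall i, texp (yinf i) = l i).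
  { intro i. unfold yinf. destruct (Rlt_dec 0 (l i)); simpl.
    - apply exp_ln; auto.
    - specialize (Hl0 i). lra. }
  apply Hnf. exists yinf. split.
  - intro H. assert (H2 : texp (yinf i0) = texp (@vzero n i0)) by (rewrite H; auto).
    rewrite Hyinf in H2. simpl in H2. pose proof (exp_pos (-1)). lra.
  - intro i. apply tle_texp. rewrite Hyinf. apply Rnot_lt_le. intro Hlt.
    set (eps := l i - texp (G yinf i)).
    destruct (Hc yinf eps) as [d [Hd Hy]]; [unfold eps; lra|].
    destruct (fin_nat_bound (fun j k => e j k - l j < d)) as [K HK].
    + intros j k k' H Hkk'. pose proof (y_dec_gen G j Hkk'). unfold e in *. lra.
    + intro j. destruct (Hcv j d Hd) as [N HN]. exists N.
      specialize (HN N (le_n _)). unfold R_dist in HN. apply Rabs_def2 in HN. lra.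
    + assert (Hd2 : forall j, tdist (yinf j) (yseq G K j) < d).
      { intro j. unfold tdist. rewrite Hyinf. specialize (HK j). specialize (Hle j K).
        unfold e in *. rewrite Rabs_minus_sym, Rabs_pos_eq; lra. }
      specialize (Hy _ Hd2 i). unfold tdist in Hy.
      assert (H5 : l i <= texp (G (yseq G K) i)).
      { specialize (Hle i (S K)). unfold e in Hle. simpl in Hle. unfold Psi in Hle.
        rewrite texp_tmin in Hle. eapply Rle_trans; [exact Hle| apply Rmin_r]. }
      apply Rabs_def2 in Hy. unfold eps in *. lra.
Qed.

Definition gt n (G : Tvec n -> Tvec n) (t : R) (x : Rvec n) : Rvec n :=
  fun i => match G (of_real x) i with
           | Some b => Rmax (Rmin (x i) b) (t + x i)
           | None => t + x i end.

Fixpoint wseq n (G : Tvec n -> Tvec n) t (k : nat) : Rvec n :=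
  match k with O => fun _ => 0 | S k => gt G t (wseq G t k) end.

Lemma gt_le n (G : Tvec n -> Tvec n) t x i : t <= 0 -> gt G t x i <= x i.
Proof.
  intro Ht. unfold gt. destruct (G (of_real x) i); [|lra].
  apply Rmax_lub; [apply Rmin_l| lra].
Qed.

Lemma w_le0 n (G : Tvec n -> Tvec n) t k i : t <= 0 -> wseq G t k i <= 0.
Proof.
  intro Ht. revert i; induction k; intro i; simpl; [lra|].
  eapply Rle_trans; [apply gt_le; auto| apply IHk].
Qed.

Lemma texp_gt n (G : Tvec n -> Tvec n) t x i :
  exp (gt G t x i) = Rmax (texp (Psi G (of_real x) i)) (exp (t + x i)).
Proof.
  unfold gt, Psi. unfold of_real at 2. destruct (G (of_real x) i); simpl.
  - rewrite exp_Rmax. reflexivity.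
  - symmetry; apply Rmax_right. left; apply exp_pos.
Qed.

Lemma approx n (G : Tvec n -> Tvec n) : continuous_T G -> forall k eps, 0 < eps ->
  exists t0, t0 <= 0 /\ forall t, t <= t0 -> forall i,
    Rabs (exp (wseq G t k i) - texp (yseq G k i)) < eps.
Proof.
  intros Hc k. induction k as [|k IH]; intros eps Heps.
  - exists 0. split; [lra|]. intros t Ht i. simpl. unfold of_real. simpl.
    rewrite Rminus_diag, Rabs_R0. auto.
  - pose proof (Psi_cont Hc) as HP. unfold continuous_T in HP.
    destruct (HP (yseq G k) (eps / 2)) as [d [Hd Hy]]; [lra|].
    destruct (IH d Hd) as [t0 [Ht0 Hw]].
    exists (Rmin t0 (ln (eps / 2) - 1)). split.
    { eapply Rle_trans; [apply Rmin_l| auto]. }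
    intros t Ht i. simpl. rewrite texp_gt.
    apply Rmax_close.
    + assert (Hd2 : forall j, tdist (yseq G k j) (of_real (wseq G t k) j) < d).
      { intro j. unfold tdist, of_real. simpl. rewrite Rabs_minus_sym. apply Hw.
        eapply Rle_trans; [exact Ht| apply Rmin_l]. }
      specialize (Hy _ Hd2 i). unfold tdist in Hy. rewrite Rabs_minus_sym. exact Hy.
    + split; [left; apply exp_pos|].
      pose proof (w_le0 G k i (Rle_trans _ _ _ Ht (Rle_trans _ _ _ (Rmin_l _ _) Ht0))).
      assert (t <= ln (eps / 2) - 1) by (eapply Rle_trans; [exact Ht| apply Rmin_r]).
      rewrite <- (exp_ln (eps / 2)) by lra. apply exp_increasing. lra.
    + apply texp_ge0.
Qed.

Lemma zconstr n (h : Rvec n -> Rvec n)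
  (Hmono : forall x y, (forall i, x i <= y i) -> forall i, h x i <= h y i)
  (Hhom : forall x r i, h (fun j => x j + r) i = h x i + r)
  K c (Hc : 0 < c) (HK : forall i, Nat.iter (S K) h (fun _ => 0) i <= - c) :
  exists z d, 0 < d /\ forall i, h z i <= z i - d.
Proof.
  set (hit := fun k => Nat.iter k h (fun _ : Fin.t n => 0)).
  set (d := c / INR (S K)).
  assert (Hd : 0 < d) by (unfold d; apply Rdiv_lt_0_compat; auto; apply lt_0_INR; lia).
  assert (Hcd : c = (INR K + 1) * d) by (unfold d; rewrite S_INR; field; pose proof (pos_INR K); lra).
  set (f := fun j : nat => fun i => hit j i + INR j * d).
  set (zf := fix zf (m : nat) : Rvec n :=
        match m with O => f O | S m => fun i => Rmin (zf m i) (f (S m) i) end).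
  assert (Hzle : forall m j i, (j <= m)%nat -> zf m i <= f j i).
  { induction m as [|m IHm]; intros j i Hj.
    - assert (j = 0%nat) by lia. subst j. simpl. lra.
    - simpl. destruct (Nat.eq_dec j (S m)) as [->|Hne].
      + apply Rmin_r.
      + eapply Rle_trans; [apply Rmin_l| apply IHm; lia]. }
  assert (Hzglb : forall m b i, (forall j, (j <= m)%nat -> b <= f j i) -> b <= zf m i).
  { induction m as [|m IHm]; intros b i Hb.
    - simpl. apply Hb; lia.
    - simpl. apply Rmin_glb; [apply IHm; intros; apply Hb; lia| apply Hb; lia]. }
  assert (Hhf : forall j i, h (f j) i = hit (S j) i + INR j * d).
  { intros j i. unfold f. rewrite Hhom. reflexivity. }
  exists (zf K), d. split; auto. intro i.
  cut (h (zf K) i + d <= zf K i); [lra|].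
  apply Hzglb. intros j Hj. destruct j as [|j].
  - assert (H1 : h (zf K) i <= h (f K) i) by (apply Hmono; intro; apply Hzle; lia).
    rewrite Hhf in H1. specialize (HK i). unfold f, hit in *. simpl in *.
    lra.
  - assert (H1 : h (zf K) i <= h (f j) i) by (apply Hmono; intro; apply Hzle; lia).
    rewrite Hhf in H1. unfold f. rewrite S_INR. lra.
Qed.

Lemma wseq_iter n (G : Tvec n -> Tvec n) t k : wseq G t k = Nat.iter k (gt G t) (fun _ => 0).
Proof. induction k; simpl; auto. rewrite IHk; auto. Qed.

Lemma gt_mono n (G : Tvec n -> Tvec n) t : order_preserving G ->
  forall x y, (forall i, x i <= y i) -> forall i, gt G t x i <= gt G t y i.
Proof.
  intros Hm x y Hxy i.
  assert (Hv : vle (of_real x) (of_real y)) by (intro j; unfold of_real; simpl; auto).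
  specialize (Hm _ _ Hv i). specialize (Hxy i). unfold gt.
  destruct (G (of_real x) i), (G (of_real y) i); simpl in *; try tauto.
  - apply Rmax_lub.
    + eapply Rle_trans; [|apply Rmax_l]. unfold Rmin; repeat destruct Rle_dec; lra.
    + eapply Rle_trans; [|apply Rmax_r]. lra.
  - eapply Rle_trans; [|apply Rmax_r]. lra.
  - lra.
Qed.

Lemma gt_hom n (G : Tvec n -> Tvec n) t : additively_homogeneous G ->
  forall x r i, gt G t (fun j => x j + r) i = gt G t x i + r.
Proof.
  intros Hh x r i. unfold gt.
  assert (E : of_real (fun j => x j + r) = vshift (Some r) (of_real x)).
  { apply functional_extensionality; intro j. unfold of_real, vshift; simpl. f_equal; ring. }
  rewrite E, Hh. unfold vshift. destruct (G (of_real x) i); simpl;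
  [unfold Rmax, Rmin; repeat destruct Rle_dec; lra| ring].
Qed.

Lemma feas_hard n (G : Tvec n -> Tvec n) :
  continuous_T G -> order_preserving G -> additively_homogeneous G ->
  (forall mu, Tset G mu -> 0 <= mu) -> feasible G.
Proof.
  intros Hc Hm Hh HT. apply NNPP; intro Hnf.
  destruct (step2 Hc Hnf) as [K HK].
  assert (He : exp (-1) < exp (-1/2)) by (apply exp_increasing; lra).
  destruct (approx Hc K (eps := exp (-1/2) - exp (-1))) as [t [Ht Hw]]; [lra|].
  specialize (Hw t (Rle_refl _)).
  assert (HwK : forall i, wseq G t K i <= - (1/2)).
  { intro i. specialize (Hw i). specialize (HK i). apply Rabs_def2 in Hw.
    left. apply exp_lt_inv. replace (- (1/2)) with (-1/2) by field. lra. }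
  destruct (zconstr (gt G t) (gt_mono t Hm) (gt_hom t Hh) K (c := 1/2)) as [z [d [Hd Hz]]].
  - lra.
  - intro i. rewrite <- wseq_iter. simpl. eapply Rle_trans; [apply gt_le; auto| apply HwK].
  - assert (HTd : Tset G (- d)).
    { exists z. intro i. specialize (Hz i). unfold gt in Hz. unfold vshift, of_real at 2. simpl.
      destruct (G (of_real z) i) as [b|]; simpl; auto.
      assert (Rmin (z i) b <= z i - d) by (eapply Rle_trans; [apply Rmax_l| exact Hz]).
      revert H. unfold Rmin; destruct Rle_dec; lra. }
    specialize (HT _ HTd). lra.
Qed.

Lemma feas_iff n (G : Tvec n -> Tvec n) :
  continuous_T G -> order_preserving G -> additively_homogeneous G ->
  (feasible G <-> forall mu, Tset G mu -> 0 <= mu).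
Proof.
  intros Hc Hm Hh. split; [apply feas_easy; auto| apply feas_hard; auto].
Qed.

Theorem mainTheorem1 (n : nat) (F : Tvec n -> Tvec n)
  (Hcont : continuous_T F) (Hmono : order_preserving F)
  (Hhom : additively_homogeneous F) :
  cond_R F = ER_inv (ER_abs (cw_lower F)) /\
  cond F = ER_inv (ER_abs (cw_upper F)).
Proof.
  split.
  - destruct (ER_sup_exists (Sset F)) as [v Hv].
    assert (Ecw : cw_lower F = v) by (apply ER_sup_eq; exact Hv).
    rewrite Ecw. unfold cond_R.
    eapply condA; [exact Hv| | | |].
    + apply feasR_iff.
    + intros u Hu. apply feasR_iff in Hu. destruct Hu as [mu [Hmu Hpos]].
      exists (mu - vnorm u). split; [apply S_trans2; auto| lra].
    + intros u [mu [Hmu Hpos]]. apply feasR_iff. exists (mu - vnorm u).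
      split; [apply S_trans1; auto| lra].
    + intros [r ->] c. destruct n as [|m].
      * exfalso. assert (HS : Sset F (r + 1)).
        { exists (fun _ => 0). intro i. inversion i. }
        pose proof (sup_fin_ub Hv _ HS). lra.
      * exists (fun _ => c). split; [apply vnorm_const|].
        rewrite feasR_iff. split.
        -- intros [mu' [Hmu' Hpos]]. exists (mu' - c). split; [|lra].
           apply (proj2 (S_const c F (mu' - c))). replace (mu' - c + c) with mu' by ring. auto.
        -- intros [mu [Hmu Hpos]]. exists (mu + c). split; [|lra].
           apply (proj1 (S_const c F mu)). auto.
  - destruct (ER_inf_exists (Tset F)) as [v Hv].
    assert (Ecw : cw_upper F = v) by (apply ER_inf_eq; exact Hv).
    rewrite Ecw. unfold cond.
    assert (Hiff : forall u, feasible (translate u F) <-> forall mu, Tset (translate u F) mu -> 0 <= mu).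
    { intro u. apply feas_iff; [apply translate_cont| apply translate_mono| apply translate_hom]; auto. }
    eapply condB; [exact Hv| | | |].
    + apply feas_iff; auto.
    + intros u Hu mu Hmu. apply (proj1 (Hiff u) Hu). apply T_trans1; auto.
    + intros u H. apply (proj2 (Hiff u)). intros mu' Hmu'. apply T_trans2 in Hmu'.
      specialize (H _ Hmu'). lra.
    + intros [r ->] c. destruct n as [|m].
      * exfalso. assert (HT : Tset F (r - 1)).
        { exists (fun _ => 0). intro i. inversion i. }
        pose proof (inf_fin_lb Hv _ HT). lra.
      * exists (fun _ => c). split; [apply vnorm_const|].
        rewrite Hiff. split.
        -- intros H mu Hmu. apply H. apply (proj1 (T_const c F mu)). auto.
        -- intros H mu' Hmu'. assert (HT : Tset F (mu' - c)).
           { apply (proj2 (T_const c F (mu' - c))). replace (mu' - c + c) with mu' by ring. auto. }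
           specialize (H _ HT). lra.
Qed.
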